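(* For every conditional model $\mathfrak{M}$ satisfying the limit assumption, every world $w$, all formulas $\varphi,\psi$ and every finite set of formulas $\Gamma$: $\mathfrak{M},w\models\varphi\sqsubseteq^\Gamma\psi$ iff $$\mathfrak{M},w\models\bigwedge_{\gamma\in\Gamma^*}\Big(\gamma\rightarrow\bigwedge_{\lambda\subseteq\gamma}\Big[\Big(\bigwedge_{\lambda\subsetneq\lambda'\subseteq\gamma}\neg\Diamond(\varphi\wedge\lambda')\Big)\rightarrow\big((\varphi\wedge\lambda)\preceq(\psi\wedge\lambda)\big)\Big]\Big).$$ Consequently $\sqsubseteq^\Gamma$ is expressible using only $\preceq$ and Boolean connectives.
   Context: A conditional model is $\mathfrak{M}=(W,\preceq,V)$: $W\ne\emptyset$, $V(p)\subseteq W$ for each propositional variable, and for each $w\in W$ a set $W_w\subseteq W$ with $w\in W_w$ and a reflexive, transitive, total relation $\preceq_w$ on $W_w$ with $w\prec_w v$ for all $v\in W_w\setminus\{w\}$; the limit assumption requires these relations (and those below) to be well-founded. $A_\Gamma(u,v)=\{\gamma\in\Gamma:\mathfrak{M},u\models\gamma\iff\mathfrak{M},v\models\gamma\}$; on $W_w$, $u\sqsubseteq^\Gamma_w v$ iff $A_\Gamma(v,w)\subsetneq A_\Gamma(u,w)$, or $A_\Gamma(v,w)=A_\Gamma(u,w)$ and $u\preceq_w v$. $\mathfrak{M},w\models\varphi\preceq\psi$ iff for every $u\in W_w$ with $u\models\psi$ there is $v\in W_w$ with $v\models\varphi$ and $v\preceq_w u$; $\mathfrak{M},w\models\varphi\sqsubseteq^\Gamma\psi$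 is defined the same way with $\sqsubseteq^\Gamma_w$ in place of $\preceq_w$. $\varphi\prec\psi:=\neg(\psi\preceq\varphi)$, $\Diamond\varphi:=\varphi\prec\bot$ (true at $w$ iff some $u\in W_w$ satisfies $\varphi$). $\Gamma^*$ is the set of all conjunctions $\bigwedge_{\gamma\in\Gamma}\pm\gamma$ with each $\pm\gamma\in\{\gamma,\neg\gamma\}$. A conjunction is identified with its set of conjuncts, so $\lambda\subseteq\gamma$ ranges over subsets of the conjuncts of $\gamma$ (treated as conjunctions). *)

(* Defs.v *)
From Stdlib Require Import List Bool Classical.
Import ListNotations.


(** Conditional models. [Ww w] is the set W_w, [le w u v] is u ≼_w v. *)
Record model : Type := Model {
  W : Type;
  V : nat -> W -> Prop;
  Ww : W -> W -> Prop;
  le : W -> W -> W -> Prop;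
  Ww_refl : forall w, Ww w w;
  le_refl : forall w u, Ww w u -> le w u u;
  le_trans : forall w u v x, Ww w u -> Ww w v -> Ww w x ->
      le w u v -> le w v x -> le w u x;
  le_total : forall w u v, Ww w u -> Ww w v -> le w u v \/ le w v u;
  le_center : forall w v, Ww w v -> v <> w -> le w w v /\ ~ le w v w
}.

(** Formulas. [Sq G a b] is a ⊑^Γ b with Γ the (finite) list G. *)
Inductive form : Type :=
| Var (p : nat)
| Bot
| Neg (a : form)
| And (a b : form)
| Or (a b : form)
| Imp (a b : form)
| Pref (a b : form)
| Sq (G : list form) (a b : form).

(** A_Γ(x,w) ⊆ A_Γ(y,w), with Γ given by the list of truth sets Ps. *)
Definition Aincl (M : model) (Ps : list (W M -> Prop)) (w x y : W M) : Prop :=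
  Forall (fun P => (P x <-> P w) -> (P y <-> P w)) Ps.

Definition sqle (M : model) (Ps : list (W M -> Prop)) (w u v : W M) : Prop :=
  (Aincl M Ps w v u /\ ~ Aincl M Ps w u v)
  \/ (Aincl M Ps w v u /\ Aincl M Ps w u v /\ le M w u v).

Definition pref_holds (M : model) (R : W M -> W M -> W M -> Prop)
  (a b : W M -> Prop) (w : W M) : Prop :=
  forall u, Ww M w u -> b u -> exists v, Ww M w v /\ a v /\ R w v u.

Fixpoint sat (M : model) (f : form) (w : W M) {struct f} : Prop :=
  match f with
  | Var p => V M p w
  | Bot => False
  | Neg a => ~ sat M a w
  | And a b => sat M a w /\ sat M b w
  | Or a b => sat M a w \/ sat M b w
  | Imp a b => sat M a w -> sat M b w
  | Pref a b => pref_holds M (le M) (sat M a) (sat M b) w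
  | Sq G a b =>
      let fix satl (l : list form) : list (W M -> Prop) :=
        match l with
        | [] => []
        | g :: l' => sat M g :: satl l'
        end in
      pref_holds M (sqle M (satl G)) (sat M a) (sat M b) w
  end.

Definition limit_assumption (M : model) : Prop :=
  (forall w, well_founded
     (fun y x => Ww M w x /\ Ww M w y /\ le M w y x /\ ~ le M w x y)) /\
  (forall (G : list form) w, well_founded
     (fun y x => Ww M w x /\ Ww M w y /\
        sqle M (map (sat M) G) w y x /\ ~ sqle M (map (sat M) G) w x y)).

Definition Top : form := Neg Bot.
Definition bigAnd (l : list form) : form := fold_right And Top l.
(* ◇φ := φ ≺ ⊥ := ¬(⊥ ≼ φ) *)
Definition Dia (a : form) : form := Neg (Pref Bot a).

Fixpoint masks (n : nat) : list (list bool) :=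
  match n with
  | 0 => [[]]
  | S k => map (cons true) (masks k) ++ map (cons false) (masks k)
  end.

Fixpoint select {A : Type} (m : list bool) (l : list A) : list A :=
  match m, l with
  | b :: m', x :: l' => if b then x :: select m' l' else select m' l'
  | _, _ => []
  end.

Fixpoint mle (m m' : list bool) : bool :=
  match m, m' with
  | b :: r, b' :: r' => implb b b' && mle r r'
  | _, _ => true
  end.
Definition mlt (m m' : list bool) : bool := mle m m' && negb (mle m' m).

Definition lit (p : bool * form) : form :=
  if fst p then snd p else Neg (snd p).

(** The conjuncts ±γ of the element of Γ* given by sign vector s. *)
Definition literals (G : list form) (s : list bool) : list form :=
  map lit (combine s G).

(** The right-hand side of the theorem. γ ranges over Γ* (sign vectors s),
    λ ⊆ γ over masks m, λ ⊊ λ' ⊆ γ over masks m' with m < m'. *)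
Definition translation (G : list form) (a b : form) : form :=
  let n := length G in
  bigAnd (map (fun s =>
    Imp (bigAnd (literals G s))
        (bigAnd (map (fun m =>
           Imp (bigAnd (map (fun m' =>
                   Neg (Dia (And a (bigAnd (select m' (literals G s))))))
                 (filter (fun m' => mlt m m') (masks n))))
               (Pref (And a (bigAnd (select m (literals G s))))
                     (And b (bigAnd (select m (literals G s))))))
         (masks n))))
    (masks n)).

(* Main.v *)
Require Import Defs.
From Stdlib Require Import List.
From Stdlib Require Import Bool Classical.
Import ListNotations.

Lemma satl_map M G : (fix satl (l : list form) : list (W M -> Prop) :=
  match l with [] => [] | g :: l' => sat M g :: satl l' end) G = map (sat M) G.
Proof. induction G; simpl; congruence. Qed.

Lemma sat_Sq M G a b w : sat M (Sq G a b) w <->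
  pref_holds M (sqle M (map (sat M) G)) (sat M a) (sat M b) w.
Proof. simpl. rewrite satl_map. reflexivity. Qed.

Lemma sat_bigAnd M l w : sat M (bigAnd l) w <-> Forall (fun f => sat M f w) l.
Proof.
  induction l; simpl.
  - split; auto.
  - rewrite Forall_cons_iff. rewrite IHl. tauto.
Qed.

Lemma masks_in n m : length m = n -> In m (masks n).
Proof.
  revert n; induction m; intros n H; destruct n; simpl in *; try discriminate; auto.
  apply in_app_iff. destruct a; [left|right]; apply in_map; auto.
Qed.

Lemma masks_len n m : In m (masks n) -> length m = n.
Proof.
  revert m; induction n; intros m H; simpl in *.
  - destruct H as [<-|[]]; reflexivity.
  - apply in_app_iff in H; destruct H as [H|H]; apply in_map_iff in H;
    destruct H as [x [<- Hx]]; simpl; rewrite IHn; auto.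
Qed.

Fixpoint lagree M w (m : list bool) (G : list form) (x : W M) : Prop :=
 match m, G with
 | b::m', g::G' => (b = true -> (sat M g x <-> sat M g w)) /\ lagree M w m' G' x
 | _, _ => True end.

Fixpoint eagree M w (a : list bool) (G : list form) (x : W M) : Prop :=
 match a, G with
 | b::a', g::G' => (b = true <-> (sat M g x <-> sat M g w)) /\ eagree M w a' G' x
 | [], [] => True
 | _, _ => False end.

Lemma eagree_ex M w G x : exists a, eagree M w a G x.
Proof.
  induction G as [|g G IH]. exists []; simpl; auto.
  destruct IH as [a Ha].
  destruct (classic (sat M g x <-> sat M g w)) as [H|H];
   [exists (true::a) | exists (false::a)]; simpl; split; auto; split; intros;
   try congruence; tauto.
Qed.

Lemma eagree_len M w a G x : eagree M w a G x -> length a = length G.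
Proof.
  revert G; induction a; destruct G; simpl; intuition.
Qed.

Lemma eagree_lagree M w a G x : eagree M w a G x ->
  forall m, (lagree M w m G x <-> mle m a = true).
Proof.
  revert G; induction a as [|b a IH]; intros G H m; destruct G as [|g G];
   simpl in H; try contradiction.
  - destruct m; simpl; tauto.
  - destruct H as [H1 H2]. destruct m as [|c m]; simpl. tauto.
    rewrite andb_true_iff, (IH _ H2 m).
    destruct c, b; simpl; intuition; try discriminate;
      try (apply H1; auto); try (apply H1 in H0; auto).
Qed.

Lemma eagree_Aincl M w a b G x y : eagree M w a G x -> eagree M w b G y ->
  (Aincl M (map (sat M) G) w x y <-> mle a b = true).
Proof.
  unfold Aincl. revert a b; induction G as [|g G IH]; intros a b Ha Hb;
   destruct a as [|a1 a]; destruct b as [|b1 b]; simpl in *; try contradiction.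
  - split; auto.
  - destruct Ha as [Ha1 Ha2], Hb as [Hb1 Hb2].
    rewrite Forall_cons_iff, andb_true_iff, (IH _ _ Ha2 Hb2).
    destruct a1, b1; simpl; intuition; try discriminate.
    all: idtac.
Qed.

Lemma lit_sel M w G s : length s = length G ->
  Forall (fun f => sat M f w) (literals G s) ->
  forall m x, (Forall (fun f => sat M f x) (select m (literals G s)) <-> lagree M w m G x).
Proof.
  unfold literals. revert s; induction G as [|g G IH]; intros s Hl Hw m x.
  - destruct s; destruct m; simpl; split; auto.
  - destruct s as [|b s]; simpl in *; try discriminate.
    injection Hl as Hl. apply Forall_cons_iff in Hw. destruct Hw as [Hw1 Hw2].
    destruct m as [|c m]; simpl. split; auto.
    destruct c.
    + rewrite Forall_cons_iff, (IH s Hl Hw2 m x).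
      unfold lit in *; destruct b; simpl in *; intuition.
    + rewrite (IH s Hl Hw2 m x). intuition discriminate.
Qed.

Lemma lit_ex M w G : exists s, length s = length G /\
  Forall (fun f => sat M f w) (literals G s).
Proof.
  unfold literals. induction G as [|g G IH]. exists []; simpl; auto.
  destruct IH as [s [Hl Hs]].
  destruct (classic (sat M g w)) as [H|H];
   [exists (true::s) | exists (false::s)]; simpl; split; auto.
Qed.

Lemma mle_refl a : mle a a = true.
Proof. induction a as [|b a IH]; simpl; auto. destruct b; simpl; auto. Qed.

Lemma mle_trans a b c : length a = length b -> length b = length c ->
  mle a b = true -> mle b c = true -> mle a c = true.
Proof.
  revert b c; induction a as [|x a IH]; intros b c H1 H2 Hab Hbc; simpl; auto.
  destruct b as [|y b]; destruct c as [|z c]; simpl in *; try discriminate.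
  apply andb_true_iff in Hab, Hbc. apply andb_true_iff.
  destruct Hab, Hbc. split.
  - destruct x, y, z; simpl in *; auto; discriminate.
  - apply (IH b c); auto; congruence.
Qed.

Lemma sat_NDia M f w : sat M (Neg (Dia f)) w <-> (forall x, Ww M w x -> ~ sat M f x).
Proof.
  unfold Dia; simpl; unfold pref_holds; simpl. split.
  - intros H x Hx Hf. apply H. intro H2. destruct (H2 x Hx Hf) as [v [_ [[] _]]].
  - intros H H2. apply H2. intros u Hu Hf. exfalso. exact (H u Hu Hf).
Qed.

Lemma sat_trans M G a b w : sat M (translation G a b) w <->
  (forall s, In s (masks (length G)) -> Forall (fun f => sat M f w) (literals G s) ->
   forall m, In m (masks (length G)) ->
   (forall m', In m' (masks (length G)) -> mlt m m' = true -> forall x, Ww M w x ->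
      ~ sat M (And a (bigAnd (select m' (literals G s)))) x) ->
   pref_holds M (le M) (sat M (And a (bigAnd (select m (literals G s)))))
     (sat M (And b (bigAnd (select m (literals G s))))) w).
Proof.
  unfold translation. rewrite sat_bigAnd, Forall_map, Forall_forall.
  split; intros H s Hs.
  - intros Hl m Hm Hno. specialize (H s Hs). cbn [sat] in H.
    specialize (H (proj2 (sat_bigAnd _ _ _) Hl)).
    rewrite sat_bigAnd, Forall_map, Forall_forall in H.
    specialize (H m Hm). cbn [sat] in H. apply H.
    apply sat_bigAnd, Forall_map, Forall_forall. intros m' Hm'.
    apply filter_In in Hm'. apply sat_NDia. apply Hno; tauto.
  - cbn [sat]. intros Hl. apply sat_bigAnd in Hl.
    apply sat_bigAnd, Forall_map, Forall_forall. intros m Hm. cbn [sat].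
    intros Hno. apply (H s Hs Hl m Hm).
    intros m' Hm' Hlt. apply sat_NDia.
    apply sat_bigAnd in Hno. rewrite Forall_map, Forall_forall in Hno.
    apply Hno. apply filter_In. auto.
Qed.

Theorem mainTheorem7 :
  forall (M : model), limit_assumption M ->
  forall (w : W M) (phi psi : form) (G : list form), NoDup G ->
    (sat M (Sq G phi psi) w <-> sat M (translation G phi psi) w).
Proof.
  intros M _ w phi psi G _.
  rewrite sat_Sq, sat_trans. unfold pref_holds. cbn [sat].
  split.
  - intros H s Hs Hlit m Hm Hno u Hu [Hpsi Hlu].
    apply masks_len in Hs. apply masks_len in Hm.
    pose proof (lit_sel M w G s Hs Hlit) as LS.
    apply sat_bigAnd, LS in Hlu.
    destruct (H u Hu Hpsi) as [v [Hv [Hphi Hsq]]].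
    destruct (eagree_ex M w G u) as [au Hau].
    destruct (eagree_ex M w G v) as [av Hav].
    pose proof (eagree_len _ _ _ _ _ Hau) as Lu.
    pose proof (eagree_len _ _ _ _ _ Hav) as Lv.
    apply (eagree_lagree _ _ _ _ _ Hau) in Hlu.
    unfold sqle in Hsq.
    rewrite (eagree_Aincl _ _ _ _ _ _ _ Hav Hau), (eagree_Aincl _ _ _ _ _ _ _ Hau Hav) in Hsq.
    destruct Hsq as [[H1 H2]|[H1 [H2 H3]]].
    + exfalso. apply (Hno av (masks_in _ _ Lv)) with v; auto.
      * unfold mlt. apply andb_true_iff; split.
        -- apply (mle_trans m au av); auto; congruence.
        -- apply negb_true_iff. destruct (mle av m) eqn:E; auto.
           exfalso; apply H2. apply (mle_trans av m au); auto; congruence.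
      * split; auto. apply sat_bigAnd, LS, (eagree_lagree _ _ _ _ _ Hav). apply mle_refl.
    + exists v. split; auto. split; [split; auto|exact H3].
      apply sat_bigAnd, LS, (eagree_lagree _ _ _ _ _ Hav).
      apply (mle_trans m au av); auto; congruence.
  - intros H u Hu Hpsi.
    destruct (eagree_ex M w G u) as [au Hau].
    pose proof (eagree_len _ _ _ _ _ Hau) as Lu.
    destruct (classic (exists v av, Ww M w v /\ sat M phi v /\ eagree M w av G v /\ mle au av = true /\ mle av au = false)) as [[v [av [Hv [Hphi [Hav [H1 H2]]]]]]|Hn].
    + exists v; split; auto; split; auto. left.
      rewrite (eagree_Aincl _ _ _ _ _ _ _ Hav Hau), (eagree_Aincl _ _ _ _ _ _ _ Hau Hav).
      split; auto. rewrite H2; discriminate.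
    + destruct (lit_ex M w G) as [s [Ls Hlit]].
      pose proof (lit_sel M w G s Ls Hlit) as LS.
      assert (Hp := H s (masks_in _ _ Ls) Hlit au (masks_in _ _ Lu)).
      destruct (Hp) with u as [v [Hv [[Hphi Hlv] Hle]]].
      * intros m' Hm' Hlt x Hx [Hphx Hlx]. apply masks_len in Hm'.
        apply sat_bigAnd, LS in Hlx.
        destruct (eagree_ex M w G x) as [ax Hax].
        pose proof (eagree_len _ _ _ _ _ Hax) as Lx.
        apply (eagree_lagree _ _ _ _ _ Hax) in Hlx.
        unfold mlt in Hlt; apply andb_true_iff in Hlt as [Hlt1 Hlt2].
        apply Hn. exists x, ax. repeat split; auto.
        -- apply (mle_trans au m' ax); auto; congruence.
        -- destruct (mle ax au) eqn:E; auto.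
           assert (mle m' au = true) by (apply (mle_trans m' ax au); auto; congruence).
           rewrite H0 in Hlt2; discriminate.
      * exact Hu.
      * split; auto. apply sat_bigAnd, LS, (eagree_lagree _ _ _ _ _ Hau), mle_refl.
      * exists v. split; auto; split; auto.
        apply sat_bigAnd, LS in Hlv.
        destruct (eagree_ex M w G v) as [av Hav].
        apply (eagree_lagree _ _ _ _ _ Hav) in Hlv.
        right.
        rewrite (eagree_Aincl _ _ _ _ _ _ _ Hav Hau), (eagree_Aincl _ _ _ _ _ _ _ Hau Hav).
        split; [|split]; auto.
        destruct (mle av au) eqn:E; auto.
        exfalso; apply Hn; exists v, av; auto.
Qed.
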